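(* Let $n\ge2$, $1\le r\le n-1$ and $\alpha,\beta,\gamma\in\mathbb{Z}_2^n$. Then (1) $\mathrm{adp}^{\mathrm{XR}}_r(\alpha,\beta\to\gamma)=\mathrm{adp}^{\mathrm{XR}}_r(\beta,\alpha\to\gamma)$; (2) $\mathrm{adp}^{\mathrm{XR}}_r(\alpha,\beta\to\gamma)=\mathrm{adp}^{\mathrm{XR}}_r(\alpha+2^{n-1},\beta+2^{n-1}\to\gamma)$; (3) $\mathrm{adp}^{\mathrm{XR}}_r(\alpha,\beta\to\gamma)=\mathrm{adp}^{\mathrm{XR}}_r(\pm\alpha,\pm\beta\to\pm\gamma)$ for every independent choice of the signs (each $\pm x$ means either $x$ or $-x$).
   Context: For $x\in\mathbb{Z}_2^n$ write $x=(x_0,\dots,x_{n-1})$ and identify $x$ with the integer $\sum_{i=0}^{n-1}x_i2^{n-1-i}$ ($x_0$ most significant); $x+y$, $x-y$, $-x$ are computed modulo $2^n$. $\oplus$ is bitwise XOR and $x\lll r=(x_r,\dots,x_{n-1},x_0,\dots,x_{r-1})$. For $f:(\mathbb{Z}_2^n)^k\to\mathbb{Z}_2^n$, $\mathrm{adp}^f(\alpha_1,\dots,\alpha_k\to\alpha_{k+1})=2^{-kn}\#\{(x_1,\dots,x_k): f(x_1+\alpha_1,\dots,x_k+\alpha_k)=f(x_1,\dots,x_k)+\alpha_{k+1}\}$. $\mathrm{adp}^{\mathrm{XR}}_r$ denotes $\mathrm{adp}^f$ for $f(x,y)=(x\oplus y)\lll r$. *)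

(* Defs.v *)
From mathcomp Require Import all_boot all_order all_algebra.
Set Implicit Arguments. Unset Strict Implicit. Unset Printing Implicit Defensive.

(* Z_2^n, identified with the integers {0,...,2^n-1}: x = sum_i x_i 2^(n-1-i),
   bit x_0 most significant. *)
Definition word (n : nat) := 'I_(2 ^ n).

Lemma pow2_gt0 (n : nat) : 0 < 2 ^ n.
Proof. by rewrite expn_gt0. Qed.

Definition mkw (n m : nat) : word n := Ordinal (ltn_pmod m (pow2_gt0 n)).

Definition bitw (n : nat) (x : word n) (i : nat) : bool := odd (x %/ 2 ^ (n - 1 - i)).

Definition of_bits (n : nat) (b : nat -> bool) : word n :=
  mkw n (\sum_(i < n) b i * 2 ^ (n - 1 - i)).

Definition addw (n : nat) (x y : word n) : word n := mkw n (x + y).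
Definition negw (n : nat) (x : word n) : word n := mkw n (2 ^ n - x).
Definition xorw (n : nat) (x y : word n) : word n :=
  of_bits n (fun i => bitw x i (+) bitw y i).
Definition rotlw (n r : nat) (x : word n) : word n :=
  of_bits n (fun i => bitw x ((i + r) %% n)).

Definition XR (n r : nat) (x y : word n) : word n := rotlw r (xorw x y).

Definition adp2 (n : nat) (f : word n -> word n -> word n) (a1 a2 a3 : word n) : rat :=
  (#|[set p : word n * word n |
      f (addw p.1 a1) (addw p.2 a2) == addw (f p.1 p.2) a3]|)%:R
  / (2 ^ (2 * n))%:R.

Definition adpXR (n r : nat) (a b c : word n) : rat := adp2 (@XR n r) a b c.

Definition sgnw (n : nat) (s : bool) (x : word n) : word n := if s then negw x else x.

(* Main.v *)
Require Import Defs.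
From mathcomp Require Import all_boot all_order all_algebra.
From mathcomp Require Import zify ring.
Set Implicit Arguments. Unset Strict Implicit. Unset Printing Implicit Defensive.
Import GRing.Theory.

Definition bit (k m : nat) : bool := odd (m %/ 2 ^ k).

Lemma bit_mod k N m : k < N -> bit k (m %% 2 ^ N) = bit k m.
Proof.
move=> kN; rewrite /bit {2}(divn_eq m (2 ^ N)).
have E : 2 ^ N = 2 ^ (N - k) * 2 ^ k by rewrite -expnD subnK // ltnW.
rewrite E mulnA addnC divnDMl ?expn_gt0 // oddD oddM oddX.
have -> : (N - k == 0) = false by apply/eqP; lia.
by rewrite /= andbF addbF.
Qed.

Lemma bit0 m : bit 0 m = odd m.
Proof. by rewrite /bit expn0 divn1. Qed.

Lemma bitS k m : bit k.+1 m = bit k (m %/ 2).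
Proof. by rewrite /bit expnS divnMA. Qed.

Lemma bits_eq N x y : x < 2 ^ N -> y < 2 ^ N ->
  (forall k, k < N -> bit k x = bit k y) -> x = y.
Proof.
elim: N x y => [|N IH] x y.
  by rewrite expn0 !ltnS !leqn0 => /eqP -> /eqP ->.
move=> hx hy hb.
have hq : x %/ 2 = y %/ 2.
  apply: IH.
  - by rewrite ltn_divLR // -expnSr.
  - by rewrite ltn_divLR // -expnSr.
  by move=> k hk; rewrite -!bitS; apply: hb.
have ho : odd x = odd y by rewrite -!bit0; apply: hb.
by rewrite (divn_eq x 2) (divn_eq y 2) !modn2 hq ho.
Qed.

Lemma bit_sum n (b : nat -> bool) i : i < n ->
  bit (n - 1 - i) (\sum_(j < n) b j * 2 ^ (n - 1 - j)) = b i.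
Proof.
elim: n i => [|n IH] i // hi.
rewrite big_ord_recr /=.
have -> : \sum_(j < n) b j * 2 ^ (n.+1 - 1 - j)
        = 2 * \sum_(j < n) b j * 2 ^ (n - 1 - j).
  rewrite big_distrr /=; apply: eq_bigr => j _.
  have -> : n.+1 - 1 - j = (n - 1 - j).+1 by have := ltn_ord j; lia.
  by rewrite expnS mulnCA.
have -> : n.+1 - 1 - n = 0 by lia.
rewrite expn0 muln1.
case: (ltngtP i n) => [lt|gt|->].
- have -> : n.+1 - 1 - i = (n - 1 - i).+1 by lia.
  rewrite bitS -(IH i lt); congr bit.
  rewrite addnC mulnC divnDMl // divn_small ?add0n //.
  by case: (b n).
- lia.
- have -> : n.+1 - 1 - n = 0 by lia.
  by rewrite bit0 oddD oddM /= ; case: (b n).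
Qed.
Section W.
Variable n : nat.
Hypothesis hn : 0 < n.
Local Notation N := (2 ^ n).

Lemma N_gt1 : 1 < N.
Proof. by rewrite -{1}(expn0 2) ltn_exp2l. Qed.

Lemma bitwE (x : word n) i : bitw x i = bit (n - 1 - i) x.
Proof. by []. Qed.

Lemma wordP (x y : word n) : (forall i, i < n -> bitw x i = bitw y i) -> x = y.
Proof.
move=> h; apply: val_inj; apply: (@bits_eq n); rewrite ?ltn_ord // => k hk.
have hk' : n - 1 - k < n by lia.
have := h (n - 1 - k) hk'.
by rewrite !bitwE (_ : n - 1 - (n - 1 - k) = k) //; lia.
Qed.

Lemma bitw_of_bits (b : nat -> bool) i : i < n -> bitw (of_bits n b) i = b i.
Proof.
move=> hi; rewrite bitwE /of_bits /mkw /= bit_mod ?bit_sum //; lia.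
Qed.

Lemma of_bits_ext (b b' : nat -> bool) :
  (forall i, i < n -> b i = b' i) -> of_bits n b = of_bits n b'.
Proof.
by move=> h; rewrite /of_bits; congr mkw; apply: eq_bigr => i _; rewrite h.
Qed.

Lemma bit_compl M x k : x < 2 ^ M -> k < M -> bit k (2 ^ M - 1 - x) = ~~ bit k x.
Proof.
elim: k M x => [|k IH] M x hx hk.
  rewrite !bit0 oddB; last by lia.
  rewrite oddB ?expn_gt0 // oddX /=.
  by have -> : (M == 0) = false by apply/eqP; lia.
case: M hx hk => [|M] // hx hk.
rewrite !bitS -(IH M (x %/ 2)); last by [].
  congr bit.
  have hd := divn_eq x 2; have hr : x %% 2 < 2 by rewrite ltn_mod.
  have hP : 2 ^ M.+1 = 2 ^ M * 2 by rewrite expnSr.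
  have -> : 2 ^ M.+1 - 1 - x = (2 ^ M - 1 - x %/ 2) * 2 + (1 - x %% 2).
    move: hx; rewrite hP; lia.
  by rewrite divnMDl // (divn_small (m := 1 - x %% 2)) ?addn0 //; lia.
by rewrite ltn_divLR // -expnSr.
Qed.

Definition toZ (x : word n) : 'Z_N := ((val x)%:R)%R.

Lemma toZ_val (x : word n) : toZ x = x :> nat.
Proof. by rewrite /toZ val_Zp_nat ?N_gt1 // modn_small ?ltn_ord. Qed.

Lemma toZ_inj : injective toZ.
Proof. by move=> x y h; apply: val_inj => /=; rewrite -(toZ_val x) -(toZ_val y) h. Qed.

Lemma toZ_mod m : ((m %% N)%:R : 'Z_N)%R = (m%:R)%R.
Proof. by rewrite Zp_nat_mod // N_gt1. Qed.

Lemma toZ_add (x y : word n) : toZ (addw x y) = (toZ x + toZ y)%R.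
Proof. by rewrite /toZ /addw /mkw /= toZ_mod natrD. Qed.

Lemma toZ_N : (N%:R : 'Z_N)%R = 0%R.
Proof. by rewrite -toZ_mod modnn. Qed.

Lemma toZ_neg (x : word n) : toZ (negw x) = (- toZ x)%R.
Proof.
by rewrite /toZ /negw /mkw /= toZ_mod natrB ?toZ_N ?sub0r // ltnW.
Qed.

Definition notw (x : word n) : word n := mkw n (N - 1 - x).

Lemma toZ_not (x : word n) : toZ (notw x) = (-1 - toZ x)%R.
Proof.
rewrite /toZ /notw /mkw /= toZ_mod -subnDA natrB; last by have := ltn_ord x; lia.
by rewrite toZ_N natrD sub0r opprD.
Qed.

Lemma bitw_not (x : word n) i : i < n -> bitw (notw x) i = ~~ bitw x i.
Proof.
move=> hi; rewrite !bitwE /notw /mkw /= bit_mod; last by lia.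
by rewrite bit_compl //; lia.
Qed.

Lemma XRC r (x y : word n) : XR r x y = XR r y x.
Proof.
by rewrite /XR /xorw; congr rotlw; apply: of_bits_ext => i _; rewrite addbC.
Qed.

Lemma XR_not r (x y : word n) : XR r (notw x) y = notw (XR r x y).
Proof.
apply: wordP => i hi.
have hj : (i + r) %% n < n by rewrite ltn_mod.
rewrite bitw_not // /XR /rotlw bitw_of_bits // bitw_of_bits // /xorw.
rewrite bitw_of_bits // bitw_of_bits //.
by rewrite bitw_not // addNb.
Qed.

Definition hw : word n := mkw n (2 ^ (n - 1)).

Lemma bitw_h (x : word n) i : i < n -> bitw (addw x hw) i = bitw x i (+) (i == 0).
Proof.
move=> hi; rewrite !bitwE /addw /hw /mkw /= bit_mod; last by lia.
rewrite (modn_small (m := 2 ^ (n - 1))); last by rewrite ltn_exp2l //; lia.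
have E : 2 ^ (n - 1) = 2 ^ i * 2 ^ (n - 1 - i) by rewrite -expnD; congr expn; lia.
rewrite /bit E divnDMl ?expn_gt0 // oddD oddX /=.
by case: i {hi E} => [|i] //=; rewrite orbF addbF.
Qed.

Lemma XR_h r (x y : word n) : XR r (addw x hw) (addw y hw) = XR r x y.
Proof.
rewrite /XR /xorw; congr rotlw; apply: of_bits_ext => i hi.
by rewrite !bitw_h // addbACA addbb addbF.
Qed.

End W.
Lemma card_bij (T : finType) (g : T -> T) (P Q : pred T) :
  bijective g -> (forall p, P p = Q (g p)) ->
  #|[set p | P p]| = #|[set p | Q p]|.
Proof.
move=> bg hPQ; have ig := bij_inj bg.
rewrite -(card_imset _ ig); apply: eq_card => q.
case: bg => g' gK Kg.
apply/imsetP/idP.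
  by case=> p; rewrite !inE hPQ => Pp ->.
move=> Qq; exists (g' q); last by rewrite Kg.
by rewrite !inE hPQ Kg; rewrite inE in Qq.
Qed.

Lemma adp_card n r (a b c a' b' c' : word n) :
  #|[set p : word n * word n |
      XR r (addw p.1 a) (addw p.2 b) == addw (XR r p.1 p.2) c]| =
  #|[set p : word n * word n |
      XR r (addw p.1 a') (addw p.2 b') == addw (XR r p.1 p.2) c']| ->
  adpXR r a b c = adpXR r a' b' c'.
Proof. by rewrite /adpXR /adp2 => ->. Qed.

Section M.
Variable n : nat.
Hypothesis hn : 0 < n.

Lemma addwK (x a : word n) : addw (addw x a) (negw a) = x.
Proof. by apply: (toZ_inj hn); rewrite !(toZ_add hn) (toZ_neg hn) // addrK. Qed.

Lemma addwNK (x a : word n) : addw (addw x (negw a)) a = x.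
Proof. by apply: (toZ_inj hn); rewrite !(toZ_add hn) (toZ_neg hn) // subrK. Qed.

Lemma negwK (x : word n) : negw (negw x) = x.
Proof. by apply: (toZ_inj hn); rewrite !(toZ_neg hn) // opprK. Qed.

Lemma notwK (x : word n) : notw (notw x) = x.
Proof. by apply: (toZ_inj hn); rewrite !(toZ_not hn) //; ring. Qed.

Lemma notw_add (x a : word n) : addw (notw x) (negw a) = notw (addw x a).
Proof. by apply: (toZ_inj hn); rewrite !((toZ_add hn), (toZ_not hn), (toZ_neg hn)) //; ring. Qed.

Lemma eq_neg (u v c : word n) : (v == addw u (negw c)) = (u == addw v c).
Proof.
apply/eqP/eqP => ->; apply: (toZ_inj hn); rewrite !((toZ_add hn), (toZ_neg hn)) //; ring.
Qed.

Lemma eq_not (u v c : word n) :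
  (notw u == addw (notw v) (negw c)) = (u == addw v c).
Proof.
apply/eqP/eqP => [h|->]; apply: (toZ_inj hn);
  last by rewrite !((toZ_add hn), (toZ_neg hn), (toZ_not hn)) //; ring.
have := congr1 (@toZ n) h; rewrite !((toZ_add hn), (toZ_neg hn), (toZ_not hn)) // => e.
have -> : toZ u = (-1 - (-1 - toZ u))%R by ring.
rewrite e; ring.
Qed.

Variable r : nat.

Lemma adpC (a b c : word n) : adpXR r a b c = adpXR r b a c.
Proof.
apply: adp_card; apply: (card_bij (g := fun p => (p.2, p.1))).
  by exists (fun p => (p.2, p.1)) => -[].
by move=> [x y] /=; rewrite XRC [XR r y x]XRC.
Qed.

Lemma adpJ (a b c : word n) : adpXR r a b c = adpXR r (negw a) (negw b) (negw c).
Proof.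
apply: adp_card.
apply: (card_bij (g := fun p => (addw p.1 a, addw p.2 b))).
  exists (fun p => (addw p.1 (negw a), addw p.2 (negw b))) => -[x y] /=.
    by rewrite !addwK.
  by rewrite !addwNK.
by move=> [x y] /=; rewrite !addwK eq_neg.
Qed.

Lemma adpA (a b c : word n) : adpXR r a b c = adpXR r (negw a) b (negw c).
Proof.
apply: adp_card.
apply: (card_bij (g := fun p => (notw p.1, p.2))).
  by exists (fun p => (notw p.1, p.2)) => -[x y] /=; rewrite notwK.
by move=> [x y] /=; rewrite notw_add !XR_not // eq_not.
Qed.

Lemma adpB (a b c : word n) : adpXR r a b c = adpXR r a (negw b) (negw c).
Proof. by rewrite adpC adpA adpC. Qed.

Lemma adpZ (a b c : word n) : adpXR r a b c = adpXR r a b (negw c).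
Proof.
by rewrite adpJ adpA negwK adpB !negwK.
Qed.

Lemma adpH (a b c : word n) :
  adpXR r a b c = adpXR r (addw a (hw n)) (addw b (hw n)) c.
Proof.
apply: adp_card; apply: eq_card => -[x y]; rewrite !inE /=.
have hA : forall u v : word n, addw u (addw v (hw n)) = addw (addw u v) (hw n).
  by move=> u v; apply: (toZ_inj hn); rewrite !(toZ_add hn) addrA.
by rewrite !hA XR_h.
Qed.

End M.

Theorem theorem5 (n r : nat) (hn : 2 <= n) (hr1 : 1 <= r) (hr2 : r <= n - 1)
    (a b c : word n) :
  adpXR r a b c = adpXR r b a c /\
  adpXR r a b c = adpXR r (addw a (mkw n (2 ^ (n - 1)))) (addw b (mkw n (2 ^ (n - 1)))) c /\
  (forall s1 s2 s3 : bool,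
     adpXR r a b c = adpXR r (sgnw s1 a) (sgnw s2 b) (sgnw s3 c)).
Proof.
have hn0 : 0 < n by apply: leq_trans hn.
split; first exact: adpC.
split; first exact: (adpH hn0).
move=> [] [] [] /=.
- exact: adpJ.
- by rewrite [RHS](adpZ hn0); apply: adpJ.
- exact: adpA.
- by rewrite [RHS](adpZ hn0); apply: adpA.
- exact: adpB.
- by rewrite [RHS](adpZ hn0); apply: adpB.
- exact: adpZ.
- by [].
Qed.
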